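(* Let $\ell,r$ be integers with $r\ge 2$ and $r+1\le\ell\le 2r-1$, and let $m=m_{r,\ell}$. Define $h(q)=(q)_{r-1}\cdot\bigl(2r-\ell+2(m-q)(\ell-r)\bigr)$ for integers $q\in[0,m]$. Then $h(q)<h(m-1)$ for all integers $q\in[0,m]\setminus\{m-1\}$.
   Context: For an integer $z$ and positive integer $k$, $(z)_k=z(z-1)\cdots(z-k+1)$ if $z>k-1$ and $(z)_k=0$ otherwise. $m_{r,\ell}$ is the unique integer $k\ge r$ maximizing $f(k)=\frac{(k-1)(k-2)\cdots(k-r+1)}{k^{\ell-1}}$ over all integers $k\ge r$. *)

(* Defs.v *)
From mathcomp Require Import all_boot all_order all_algebra.
Set Implicit Arguments. Unset Strict Implicit. Unset Printing Implicit Defensive.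
Import Order.TTheory GRing.Theory Num.Theory.
Local Open Scope ring_scope.

Definition ffall (z k : nat) : nat := (z ^_ k)%N.

Definition fval (r l k : nat) : rat :=
  (ffall k.-1 r.-1)%:R / (k ^ l.-1)%:R.

Definition is_m_rl (r l m : nat) : Prop :=
  (r <= m)%N /\ forall k : nat, (r <= k)%N -> k != m -> fval r l k < fval r l m.

Definition hval (r l m q : nat) : int :=
  (ffall q r.-1)%:Z *
  (2 * r%:Z - l%:Z + 2 * (m%:Z - q%:Z) * (l%:Z - r%:Z)).

(* Main.v *)
Require Import Defs.
From mathcomp Require Import all_boot all_order all_algebra.
From mathcomp Require Import ring lra zify.
Import Order.TTheory GRing.Theory Num.Theory.
Local Open Scope ring_scope.

Lemma step_le (N D p A B : int) : 0 <= N -> 0 <= p -> (N+1)* p < D -> 0 <= A -> 0 <= B ->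
  A * (D - N* p) <= B * (D + N* p) ->
  (D+p)*A*(D-(N+1)* p) <= (D-p)*B*(D+(N+1)* p).
Proof.
move=> hN hp hD hA hB IH.
have hNp' : 0 <= N * p by apply: mulr_ge0; lra.
have hNp : 0 <= N * p by exact: mulr_ge0.
have hX : 0 <= (D-p)*(D+(N+1)* p) by apply: mulr_ge0; lra.
have hc : 0 <= A * (2*N*(N+1)* p^+3).
  by apply: mulr_ge0 => //; rewrite !mulr_ge0 ?exprn_ge0 //; lra.
have h2 := ler_wpM2r hX IH.
have hpos : 0 < D + N* p by lra.
rewrite -(ler_pM2r hpos).
have e1 : (D+p)*A*(D-(N+1)* p)*(D+N* p) = A*(D-N* p)*((D-p)*(D+(N+1)* p)) - A * (2*N*(N+1)* p^+3) by ring.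
have e2 : (D-p)*B*(D+(N+1)* p)*(D+N* p) = B*(D+N* p)*((D-p)*(D+(N+1)* p)) by ring.
rewrite e1 e2. lra.
Qed.

Lemma step_lt (N D p A B : int) : 0 < N -> 0 < p -> (N+1)* p < D -> 0 < A -> 0 <= B ->
  A * (D - N* p) <= B * (D + N* p) ->
  (D+p)*A*(D-(N+1)* p) < (D-p)*B*(D+(N+1)* p).
Proof.
move=> hN hp hD hA hB IH.
have hNp : 0 <= N * p by apply: mulr_ge0; lra.
have hX : 0 <= (D-p)*(D+(N+1)* p) by apply: mulr_ge0; lra.
have hc : 0 < A * (2*N*(N+1)* p^+3).
  by apply: mulr_gt0 => //; rewrite !mulr_gt0 ?exprn_gt0 //; lra.
have h2 := ler_wpM2r hX IH.
have hpos : 0 < D + N* p by lra.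
rewrite -(ltr_pM2r hpos).
have e1 : (D+p)*A*(D-(N+1)* p)*(D+N* p) = A*(D-N* p)*((D-p)*(D+(N+1)* p)) - A * (2*N*(N+1)* p^+3) by ring.
have e2 : (D-p)*B*(D+(N+1)* p)*(D+N* p) = B*(D+N* p)*((D-p)*(D+(N+1)* p)) by ring.
rewrite e1 e2. lra.
Qed.

Lemma P_le (n : nat) (D p : int) : 0 <= p -> n%:R * p < D ->
  (D+p)^+n * (D - n%:R* p) <= (D-p)^+n * (D + n%:R* p).
Proof.
move=> hp; elim: n => [|n IH] hD; first by rewrite !expr0 !mul1r mul0r; lra.
have hN : (0:int) <= n%:R by [].
rewrite -natr1 in hD *.
have hD' : n%:R * p < D by nra.
have hA : 0 <= (D+p)^+n by apply: exprn_ge0; nra.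
have hB : 0 <= (D-p)^+n by apply: exprn_ge0; nra.
rewrite !exprS.
exact: step_le hN hp hD hA hB (IH hD').
Qed.

Lemma P_lt (n : nat) (D p : int) : 0 < p -> n.+2%:R * p < D ->
  (D+p)^+n.+2 * (D - n.+2%:R* p) < (D-p)^+n.+2 * (D + n.+2%:R* p).
Proof.
move=> hp hD.
have hN : (0:int) < n.+1%:R by rewrite ltr0n.
rewrite -(@natr1 int n.+1) in hD *.
have hD' : n.+1%:R * p < D by nra.
have hA : 0 < (D+p)^+n.+1 by apply: exprn_gt0; nra.
have hB : 0 <= (D-p)^+n.+1 by apply: exprn_ge0; nra.
rewrite (exprS (D+p) n.+1) (exprS (D-p) n.+1).
exact: step_lt hN hp hD hA hB (@P_le n.+1 D p (ltW hp) hD').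
Qed.

Lemma binom_lb (n : nat) (k : int) : 0 <= k ->
  k^+n * (2*k^+2 + 2*n%:R*k + n%:R*(n%:R-1)) <= 2*(k+1)^+n * k^+2.
Proof.
move=> hk; elim: n => [|n IH]; first by rewrite !expr0; lra.
rewrite -[n.+1%:R]natr1 (exprS k n) (exprS (k+1) n).
have hN : (0:int) <= n%:R by [].
have hkn : 0 <= k^+n by exact: exprn_ge0.
have h1 := ler_wpM2l (addr_ge0 hk ler01) IH.
have h2 : 0 <= k^+n * (n%:R*(n%:R-1)).
  apply: mulr_ge0 => //. case: n {IH h1 hN hkn} => [|n]; first by rewrite mul0r.
  apply: mulr_ge0 => //. rewrite -natr1 addrK //.
have e : k * k ^+ n * (2 * k ^+ 2 + 2 * (n%:R + 1) * k + (n%:R + 1) * (n%:R + 1 - 1))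
   = (k+1) * (k ^+ n * (2 * k ^+ 2 + 2 * n%:R * k + n%:R * (n%:R - 1))) - k^+n * (n%:R*(n%:R-1)) by ring.
rewrite e.
have e2 : 2 * ((k + 1) * (k + 1) ^+ n) * k ^+ 2 = (k+1) * (2 * (k + 1) ^+ n * k ^+ 2) by ring.
rewrite e2. lra.
Qed.

Lemma polyB (r a k : int) : 1 <= a -> a <= r - 1 -> r <= k ->
  (r-1)*(r+3*a) <= 2*a*k ->
  2*k^+3 <= (k-r+1)*(2*k^+2 + 2*(r+a-1)*k + (r+a-1)*(r+a-2)).
Proof.
move=> h1 h2 h3 h4.
have e : (k-r+1)*(2*k^+2 + 2*(r+a-1)*k + (r+a-1)*(r+a-2)) - 2*k^+3
  = k * (2*a*k) - (r+a-1)*(r-a)*k - (r+a-1)*(r+a-2)*(r-1) by ring.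
rewrite -subr_ge0 e.
have hk : 0 <= k by lra.
have s1 := ler_wpM2l hk h4.
have s2 : (r+a-1)*(r+a-2)*(r-1) * 2 <= (2*r-3+r+a-1)*((r-1)*(r+3*a)).
  have hr1 : 0 <= (r-1) by lra.
  have hi : 2*((r+a-1)*(r+a-2)) <= (2*r-3+r+a-1)*(r+3*a).
    have : 0 <= (r-2)*(a-1) by apply: mulr_ge0; lra.
    have : 0 <= r*r by nra.
    nra.
  have := ler_wpM2l hr1 hi.
  have e1 : (r + a - 1) * (r + a - 2) * (r - 1) * 2 = (r-1) * (2 * ((r + a - 1) * (r + a - 2))) by ring.
  have e2 : (2 * r - 3 + r + a - 1) * ((r - 1) * (r + 3 * a)) = (r - 1) * ((2 * r - 3 + r + a - 1) * (r + 3 * a)) by ring.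
  by rewrite e1 e2.
have s3 : 0 <= 2*r-3+r+a-1 by lra.
have s4 := ler_wpM2l s3 h4.
nra.
Qed.

Lemma boundB (n : nat) (r a k : int) : n%:R = r+a-1 -> 1 <= a -> a <= r - 1 -> r <= k ->
  (r-1)*(r+3*a) <= 2*a*k ->
  k^+n.+1 <= (k-r+1)*(k+1)^+n.
Proof.
move=> hn h1 h2 h3 h4.
have hk : 0 <= k by lra.
have hb := @binom_lb n k hk. rewrite hn in hb.
have e : r + a - 1 - 1 = r + a - 2 by ring. rewrite e in hb.
have hp := @polyB r a k h1 h2 h3 h4.
have hY : 0 <= k^+n by exact: exprn_ge0.
have hk2 : 0 < 2 * k^+2 by apply: mulr_gt0 => //; apply: exprn_gt0; lra.
rewrite -(ler_pM2r hk2).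
have s1 := ler_wpM2l hY hp.
have hkr : 0 <= k - r + 1 by lra.
have s2 := ler_wpM2l hkr hb.
have e1 : k ^+ n.+1 * (2 * k ^+ 2) = k^+n * (2*k^+3) by rewrite exprS; ring.
rewrite e1.
apply: (le_trans s1).
have e2 : k ^+ n * ((k - r + 1) * (2 * k ^+ 2 + 2 * (r + a - 1) * k + (r + a - 1) * (r + a - 2)))
  = (k - r + 1) * (k ^+ n * (2 * k ^+ 2 + 2 * (r + a - 1) * k + (r + a - 1) * (r + a - 2))) by ring.
rewrite e2. apply: (le_trans s2). rewrite !mulrA. lra.
Qed.

Lemma boundA (n : nat) (r a k : int) : n%:R = r+a-1 -> 1 <= a -> a <= r - 1 -> r <= k ->
  2*a*k <= (r-1)*(r+a) ->
  (k-r+1)*(k+1)^+n < k^+n.+1.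
Proof.
move=> hn h1 h2 h3 h4.
have hk : 0 < k by lra.
case: n hn => [|[|n]] hn.
- exfalso; move: hn; rewrite /= => hn; lra.
- exfalso; move: hn; rewrite /= => hn; lra.
have hD : n.+2%:R * 1 < 2*k+1 by rewrite mulr1 hn; lra.
have hP := @P_lt n (2*k+1) 1 ltr01 hD.
rewrite !mulr1 hn in hP.
have e1 : 2 * k + 1 + 1 = 2 * (k+1) by ring.
have e2 : 2 * k + 1 - 1 = 2 * k by ring.
rewrite e1 e2 !exprMn in hP.
have hT : 0 < (2:int)^+n.+2 by apply: exprn_gt0.
have hc : (2*k+1 + (r+a-1))*(k-r+1) <= k*(2*k+1-(r+a-1)) by nra.
have hY : 0 <= (2:int)^+n.+2 * k^+n.+2 by apply: mulr_ge0; [lra| apply: exprn_ge0; lra].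
have hkr : 0 < k - r + 1 by lra.
have s1 := ltr_pM2r hkr. 
have hpos : 0 < (2:int)^+n.+2 * (2*k+1-(r+a-1)) by apply: mulr_gt0 => //; lra.
rewrite -(ltr_pM2r hpos).
have s2 := ler_wpM2l hY hc.
have s3 : 2 ^+ n.+2 * (k + 1) ^+ n.+2 * (2 * k + 1 - (r + a - 1)) * (k-r+1) <
       2 ^+ n.+2 * k ^+ n.+2 * (2 * k + 1 + (r + a - 1)) * (k-r+1).
  by rewrite (ltr_pM2r hkr).
rewrite (exprSr k n.+2).
lra.
Qed.
Lemma ffid (k s : nat) : (k.+1 ^_ s * (k.+1 - s) = k.+1 * k ^_ s)%N.
Proof. by rewrite -ffactnSr ffactSS. Qed.

Lemma fval_nat (r l k : nat) : (1 <= r)%N -> (r <= k)%N ->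
  (fval r l k.+1 < fval r l k) = (k * k ^ l.-1 < (k+1)^l.-1 * (k - r.-1))%N /\
  (fval r l k < fval r l k.+1) = ((k+1)^l.-1 * (k - r.-1) < k * k ^ l.-1)%N.
Proof.
case: r => [//|s] _ hk /=.
case: k hk => [//|k] hk.
set n := l.-1.
have hB : (0:rat) < (k.+2 ^ n)%:R by rewrite ltr0n expn_gt0.
have hD : (0:rat) < (k.+1 ^ n)%:R by rewrite ltr0n expn_gt0.
have hG : (0 < k ^_ s)%N by rewrite ffact_gt0; lia.
have hks : (0 < k.+1 - s)%N by lia.
rewrite /fval /ffall /= /n; split.
- rewrite ltr_pdivrMr // mulrAC ltr_pdivlMr // -!natrM ltr_nat.
  rewrite -(ltn_pmul2r hks) [X in (X < _)%N]mulnAC ffid.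
  rewrite [X in (X < _)%N]mulnAC -[X in (_ < X)%N]mulnA [X in (_ < X)%N]mulnC.
  by rewrite ltn_pmul2r // addn1.
- rewrite ltr_pdivrMr // mulrAC ltr_pdivlMr // -!natrM ltr_nat.
  rewrite -(ltn_pmul2r hks) [X in (_ < X)%N]mulnAC ffid.
  rewrite [X in (_ < X)%N]mulnAC -[X in (X < _)%N]mulnA [X in (X < _)%N]mulnC.
  by rewrite ltn_pmul2r // addn1.
Qed.

Lemma n2i (k n s : nat) : (s <= k)%N ->
  ((k * k^n < (k+1)^n * (k - s))%N = ((k:int)^+n.+1 < ((k:int) - s.+1%:R + 1) * ((k:int)+1)^+n))
  /\ (((k+1)^n * (k - s) < k * k^n)%N = (((k:int) - s.+1%:R + 1) * ((k:int)+1)^+n < (k:int)^+n.+1)).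
Proof.
move=> hs.
have e1 : ((k * k^n)%N : int) = (k:int)^+n.+1.
  by rewrite -natz natrM natrX exprS natz.
have e2 : (((k+1)^n * (k - s))%N : int) = ((k:int) - s.+1%:R + 1) * ((k:int)+1)^+n.
  rewrite -natz natrM natrX natrB // natrD natz mulrC; congr (_ * _).
  rewrite -natr1; ring.
by rewrite -!ltz_nat e1 e2.
Qed.

Lemma PoszS (n : nat) : (n.+1 : int) = (n : int) + 1.
Proof. by rewrite -addn1 PoszD. Qed.

Theorem lemma4p3 (r l m : nat) :
  (2 <= r)%N -> (r.+1 <= l)%N -> (l <= 2 * r - 1)%N ->
  is_m_rl r l m ->
  forall q : nat, (q <= m)%N -> q != m.-1 ->
    hval r l m q < hval r l m m.-1.
Proof.
move=> hr hl hl2 [hrm hmax] q hq hqm.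
case: r hr hl hl2 hrm hmax => [//|s] hr hl hl2 hrm hmax.
case: l hl hl2 hmax => [//|n] hl hl2 hmax.
set a : int := (n.+1 : int) - (s.+1 : int).
have ha1 : 1 <= a by rewrite /a !PoszS; lia.
have ha2 : a <= (s.+1:int) - 1 by rewrite /a !PoszS; lia.
have hna : (n%:R : int) = (s.+1:int) + a - 1 by rewrite natz /a !PoszS; lra.
have HA : ((s.+1:int) - 1) * ((s.+1:int) + a) < 2 * a * (m:int).
  rewrite ltNge; apply/negP => H.
  have hf := hmax m.+1 (leqW hrm) _.
  have {}hf : fval s.+1 n.+1 m.+1 < fval s.+1 n.+1 m by apply: hf; apply/eqP; lia.
  have [h1 _] := fval_nat s.+1 n.+1 m isT hrm.
  rewrite h1 /= in hf.
  have [h3 _] := n2i m n s (ltnW hrm).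
  rewrite h3 in hf.
  have hb := @boundA n (s.+1:int) a (m:int) hna ha1 ha2 (hrm : ((s.+1:int) <= m)) H.
  rewrite natz in hf. clear -hf hb. lra.
have HB : 2 * a * (m:int) < ((s.+1:int) - 1) * ((s.+1:int) + a) + 2 * a * (s.+1:int).
  case: (ltngtP m s.+1) => [|hgt|->]; first by rewrite ltnNge hrm.
  - case: m hgt hrm hmax hq hqm HA => [//|k] hgt hrm hmax hq hqm HA.
    have hrk : (s.+1 <= k)%N by [].
    rewrite ltNge; apply/negP => H.
    have hf : fval s.+1 n.+1 k < fval s.+1 n.+1 k.+1 by apply: hmax => //; apply/eqP; lia.
    have [_ h1] := fval_nat s.+1 n.+1 k isT hrk.
    rewrite h1 /= in hf.
    have [_ h3] := n2i k n s (ltnW hrk).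
    rewrite h3 in hf.
    have H' : ((s.+1:int) - 1) * ((s.+1:int) + 3 * a) <= 2 * a * (k:int).
      rewrite !PoszS in H *. clear -H ha1. lra.
    have hb := @boundB n (s.+1:int) a (k:int) hna ha1 ha2 (hrk : ((s.+1:int) <= k)) H'.
    rewrite natz in hf. clear -hf hb. lra.
  - have : 0 < ((s.+1:int) - 1) * ((s.+1:int) + a) by apply: mulr_gt0; rewrite PoszS; lra.
    lra.
clear hmax.
pose G := fun q : nat => (s.+1:int) - a + 2 * a * ((m:int) - (q:int)).
have hvalE : forall q, hval s.+1 n.+1 m q = (ffall q s : int) * G q.
  move=> q0; rewrite /hval /G /a /=; congr (_ * _); ring.
have fid : forall q, (s <= q)%N ->
    (ffall q.+1 s : int) * ((q:int) + 1 - (s:int)) = ((q:int) + 1) * (ffall q s : int).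
  move=> q0 hq0.
  have := ffid q0 s. rewrite /ffall => /(congr1 Posz).
  rewrite !PoszM -subzn; last by lia.
  by rewrite !PoszS.
have Fpos : forall q, (s <= q)%N -> (0:int) < (ffall q s : int).
  by move=> q0 hq0; rewrite ltz_nat /ffall ffact_gt0.
have hS : (1:int) <= (s:int) by rewrite lez_nat; lia.
have ha2' : a <= (s:int) by rewrite PoszS in ha2; lra.
rewrite PoszS in HA HB.
have step : forall q, (s <= q)%N -> (q.+2 <= m)%N ->
    hval s.+1 n.+1 m q < hval s.+1 n.+1 m q.+1.
  move=> q0 hq0 hqm0.
  rewrite !hvalE.
  have hq0' : (s:int) <= (q0:int) by rewrite lez_nat.
  have hm0 : (q0.+2:int) <= (m:int) by rewrite lez_nat.
  rewrite !PoszS in hm0.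
  have hd : (0:int) < (q0:int) + 1 - (s:int) by lra.
  have F0 := Fpos q0 hq0.
  have e := fid q0 hq0.
  rewrite /G !PoszS.
  set F0v := (ffall q0 s : int) in F0 e *.
  set F1v := (ffall q0.+1 s : int) in e *.
  have P : ((q0:int) + 1 - (s:int)) * ((s:int) + 1 - a + 2 * a * ((m:int) - (q0:int)))
     < ((q0:int) + 1) * ((s:int) + 1 - a + 2 * a * ((m:int) - ((q0:int) + 1))).
    have hh : 0 <= (a * ((s:int) + 1)) * ((m:int) - (q0:int) - 2).
      by apply: mulr_ge0; [apply: mulr_ge0|]; lra.
    clear -HB hh. lra.
  have K := ltr_pM2l F0 (((q0:int) + 1 - (s:int)) * ((s:int) + 1 - a + 2 * a * ((m:int) - (q0:int))))
     (((q0:int) + 1) * ((s:int) + 1 - a + 2 * a * ((m:int) - ((q0:int) + 1)))).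
  rewrite P in K.
  have e' := congr1 (fun x => x * ((s:int) + 1 - a + 2 * a * ((m:int) - ((q0:int) + 1)))) e. simpl in e'.
  rewrite -(ltr_pM2l hd).
  clear -K e'. lra.
have [k hk] : exists k, m = k.+1 by exists m.-1; lia.
subst m.
have hsk : (s <= k)%N by lia.
have Fk := Fpos k hsk.
have hpos : 0 < hval s.+1 n.+1 k.+1 k.
  rewrite hvalE /G; apply: mulr_gt0 => //; rewrite !PoszS; lra.
have mcase : hval s.+1 n.+1 k.+1 k.+1 < hval s.+1 n.+1 k.+1 k.
  rewrite !hvalE /G !PoszS.
  have hsk' : (s:int) <= (k:int) by rewrite lez_nat.
  have hd : (0:int) < (k:int) + 1 - (s:int) by lra.
  have e := fid k hsk.
  set F0v := (ffall k s : int) in Fk e *.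
  set F1v := (ffall k.+1 s : int) in e *.
  have P : ((k:int) + 1) * ((s:int) + 1 - a + 2 * a * ((k:int) + 1 - ((k:int) + 1)))
     < ((k:int) + 1 - (s:int)) * ((s:int) + 1 - a + 2 * a * ((k:int) + 1 - (k:int))).
    clear -HA. lra.
  have K := ltr_pM2l Fk (((k:int) + 1) * ((s:int) + 1 - a + 2 * a * ((k:int) + 1 - ((k:int) + 1))))
     (((k:int) + 1 - (s:int)) * ((s:int) + 1 - a + 2 * a * ((k:int) + 1 - (k:int)))).
  rewrite P in K.
  have e' := congr1 (fun x => x * ((s:int) + 1 - a + 2 * a * ((k:int) + 1 - ((k:int) + 1)))) e. simpl in e'.
  rewrite -(ltr_pM2l hd).
  clear -K e'. lra.
have chain : forall j q, (s <= q)%N -> (q + j.+2 <= k.+1)%N ->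
    hval s.+1 n.+1 k.+1 q < hval s.+1 n.+1 k.+1 (q + j.+1).
  elim => [|j IH] q0 hs0 hj.
    by rewrite addn1; apply: step => //; lia.
  apply: lt_trans (IH q0 hs0 _) _; first by lia.
  by rewrite (addnS q0 j.+1); apply: step; lia.
rewrite /=.
have [->|hqk] := eqVneq q k.+1; first exact: mcase.
have hqk' : (q < k)%N by move: hqm; rewrite /= => hqm; lia.
case: (ltnP q s) => hqs.
  by rewrite hvalE /ffall ffact_small // mul0r.
have hk1 : (q + (k - q - 1).+1 = k)%N by lia.
have := chain (k - q - 1)%N q hqs; rewrite hk1; apply; lia.
Qed.
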